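(* Fix $\lambda>0$ and a positive integer $d$. Let $\phi$ be a message and $\Phi=\phi'$. Let $p,q$ be positive reals with $\frac1p+\frac1q=1$. Define $$S_{\phi,p}(x)=\left(\frac{e^{-x}}{\Phi(e^x-1)}\right)^p,\qquad \Xi_{\phi,q}(d,x)=d^{q-1}\left(\frac{\Phi(f_d(x))f_d(x)}{(1+x)\Phi(x)}\right)^q,$$ and $\xi_{\phi,q}(d)=\sup_{x\ge0}\Xi_{\phi,q}(d,x)$. If $S_{\phi,p}$ is concave on the non-negative reals, then for any two vectors $\vec x,\vec y\in\phi(\mathbb R^+)^d$, $$\left|f^\phi_d(\vec x)-f^\phi_d(\vec y)\right|^q\le\xi_{\phi,q}(d)\,\|\vec x-\vec y\|_q^q.$$
   Context: $f_d(R_1,\dots,R_d)=\lambda\prod_{i=1}^d\frac{1}{1+R_i}$, and the one-argument version is $f_d(x)=f_d(x,\dots,x)=\lambda/(1+x)^d$. A message is a strictly increasing, continuously differentiable function $\phi:(0,\infty)\to\mathbb R$ whose derivative is bounded away from $0$ on every interval $(0,M]$. With $\psi=\phi^{-1}$, $f^\phi_d(x_1,\dots,x_d)=\phi\big(f_d(\psi(x_1),\dots,\psi(x_d))\big)$. *)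

(* Defs.v *)
From Stdlib Require Import Reals Lra ClassicalEpsilon.
From Coquelicot Require Import Coquelicot.
Open Scope R_scope.

(* Real power for nonnegative bases: 0^a = 0, x^a = exp(a ln x) for x > 0. *)
Definition rpow (x a : R) : R := if Rle_dec x 0 then 0 else Rpower x a.

Fixpoint sumR (n : nat) (f : nat -> R) : R :=
  match n with O => 0 | S m => sumR m f + f m end.
Fixpoint prodR (n : nat) (f : nat -> R) : R :=
  match n with O => 1 | S m => prodR m f * f m end.

(* f_d(R_1,...,R_d) = lambda * prod_i 1/(1+R_i) ; vectors are nat -> R, indices < d *)
Definition fd (d : nat) (lambda : R) (Rv : nat -> R) : R :=
  lambda * prodR d (fun i => / (1 + Rv i)).

Definition fd1 (d : nat) (lambda x : R) : R := lambda / (1 + x) ^ d.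

(* A message: phi on (0,oo), strictly increasing, C^1, derivative bounded away
   from 0 on every (0,M]. Values of phi outside (0,oo) are irrelevant. *)
Definition message (phi : R -> R) : Prop :=
  (forall x y, 0 < x -> x < y -> phi x < phi y) /\
  (forall x, 0 < x -> ex_derive phi x) /\
  (forall x, 0 < x -> continuous (Derive phi) x) /\
  (forall M, 0 < M -> exists c, 0 < c /\ forall x, 0 < x -> x <= M -> c <= Rabs (Derive phi x)).

(* psi = phi^{-1} : the (unique, since phi is injective on (0,oo)) r > 0 with phi r = y *)
Definition psi (phi : R -> R) (y : R) : R :=
  epsilon (inhabits 0) (fun r => 0 < r /\ phi r = y).

Definition fphi (d : nat) (lambda : R) (phi : R -> R) (xv : nat -> R) : R :=
  phi (fd d lambda (fun i => psi phi (xv i))).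

Definition S_phi (phi : R -> R) (p x : R) : R :=
  rpow (exp (- x) / Derive phi (exp x - 1)) p.

Definition Xi_phi (phi : R -> R) (lambda q : R) (d : nat) (x : R) : R :=
  rpow (INR d) (q - 1) *
  rpow (Derive phi (fd1 d lambda x) * fd1 d lambda x / ((1 + x) * Derive phi x)) q.

Definition xi_phi (phi : R -> R) (lambda q : R) (d : nat) : Rbar :=
  Lub_Rbar (fun r => exists x, 0 < x /\ r = Xi_phi phi lambda q d x).

Definition concave_pos (f : R -> R) : Prop :=
  forall a b t, 0 < a -> 0 < b -> 0 <= t <= 1 ->
    t * f a + (1 - t) * f b <= f (t * a + (1 - t) * b).

Definition qnorm_pow (d : nat) (q : R) (xv yv : nat -> R) : R :=
  sumR d (fun i => rpow (Rabs (xv i - yv i)) q).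

(* Main.v *)
Require Import Defs.
From Stdlib Require Import Reals Lra Lia FunctionalExtensionality ClassicalEpsilon Ranalysis5.
From Coquelicot Require Import Coquelicot.
Open Scope R_scope.

Lemma sumR_ext n f g : (forall i, (i < n)%nat -> f i = g i) -> sumR n f = sumR n g.
Proof. induction n; simpl; intros H; auto. rewrite IHn by (intros; apply H; lia). rewrite H by lia; auto. Qed.
Lemma prodR_ext n f g : (forall i, (i < n)%nat -> f i = g i) -> prodR n f = prodR n g.
Proof. induction n; simpl; intros H; auto. rewrite IHn by (intros; apply H; lia). rewrite H by lia; auto. Qed.
Lemma sumR_le n f g : (forall i, (i < n)%nat -> f i <= g i) -> sumR n f <= sumR n g.
Proof. induction n; simpl; intros H; [lra|]. assert (f n <= g n) by (apply H; lia). assert (sumR n f <= sumR n g) by (apply IHn; intros; apply H; lia). lra. Qed.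
Lemma sumR_nonneg n f : (forall i, (i < n)%nat -> 0 <= f i) -> 0 <= sumR n f.
Proof. intros H. replace 0 with (sumR n (fun _ => 0)). apply sumR_le; auto. induction n; simpl; auto. rewrite IHn; [lra|intros; apply H; lia]. Qed.
Lemma sumR_pos n f : (1 <= n)%nat -> (forall i, (i < n)%nat -> 0 < f i) -> 0 < sumR n f.
Proof. destruct n; [lia|]. intros _ H. simpl. assert (0 <= sumR n f) by (apply sumR_nonneg; intros; left; apply H; lia). assert (0 < f n) by (apply H; lia). lra. Qed.
Lemma sumR_zero n f : (forall i, (i < n)%nat -> 0 <= f i) -> sumR n f = 0 -> forall i, (i < n)%nat -> f i = 0.
Proof. induction n; simpl; intros H Hs i Hi; [lia|].
  assert (0 <= sumR n f) by (apply sumR_nonneg; intros; apply H; lia). assert (0 <= f n) by (apply H; lia).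
  destruct (Nat.eq_dec i n). subst; lra. apply IHn; [intros; apply H; lia|lra|lia]. Qed.
Lemma sumR_scal n c f : sumR n (fun i => c * f i) = c * sumR n f.
Proof. induction n; simpl; [ring|]. rewrite IHn; ring. Qed.
Lemma sumR_plus n f g : sumR n (fun i => f i + g i) = sumR n f + sumR n g.
Proof. induction n; simpl; [ring|]. rewrite IHn; ring. Qed.
Lemma sumR_opp n f : sumR n (fun i => - f i) = - sumR n f.
Proof. induction n; simpl; [ring|]. rewrite IHn; ring. Qed.
Lemma sumR_abs n f : Rabs (sumR n f) <= sumR n (fun i => Rabs (f i)).
Proof. induction n; simpl. rewrite Rabs_R0; lra. eapply Rle_trans. apply Rabs_triang. lra. Qed.
Lemma prodR_pos n f : (forall i, (i < n)%nat -> 0 < f i) -> 0 < prodR n f.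
Proof. induction n; simpl; intros H; [lra|]. apply Rmult_lt_0_compat; [apply IHn; intros; apply H; lia|apply H; lia]. Qed.
Lemma prodR_inv n f : (forall i, (i < n)%nat -> 0 < f i) -> prodR n (fun i => / f i) = / prodR n f.
Proof. induction n; simpl; intros H; [rewrite Rinv_1; auto|]. rewrite IHn by (intros; apply H; lia).
  rewrite Rinv_mult. auto. Qed.
Lemma exp_sumR n f : exp (sumR n f) = prodR n (fun i => exp (f i)).
Proof. induction n; simpl; [apply exp_0|]. rewrite exp_plus, IHn; auto. Qed.
Lemma exp_pow_INR x n : exp x ^ n = exp (INR n * x).
Proof. induction n; simpl. rewrite Rmult_0_l, exp_0; auto. rewrite IHn, <- exp_plus. f_equal. destruct n; simpl; ring. Qed.
Lemma rpow_pos_eq x a : 0 < x -> rpow x a = Rpower x a.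
Proof. intros H. unfold rpow. destruct (Rle_dec x 0); [lra|auto]. Qed.
Lemma rpow_0 a : rpow 0 a = 0.
Proof. unfold rpow. destruct (Rle_dec 0 0); [auto|lra]. Qed.
Lemma rpow_pos x a : 0 < x -> 0 < rpow x a.
Proof. intros H. rewrite rpow_pos_eq by auto. unfold Rpower. apply exp_pos. Qed.
Lemma rpow_nonneg x a : 0 <= rpow x a.
Proof. unfold rpow. destruct (Rle_dec x 0); [lra|]. left; unfold Rpower; apply exp_pos. Qed.
Lemma rpow_le u v a : 0 <= a -> 0 <= u <= v -> rpow u a <= rpow v a.
Proof. intros Ha [Hu Huv]. destruct Hu as [Hu|Hu].
  rewrite !rpow_pos_eq by lra. apply Rle_Rpower_l; lra.
  subst. rewrite rpow_0. apply rpow_nonneg. Qed.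
Lemma rpow_mult x y a : 0 <= x -> 0 <= y -> rpow (x * y) a = rpow x a * rpow y a.
Proof. intros [Hx|Hx] [Hy|Hy]; try (subst; rewrite ?Rmult_0_l, ?Rmult_0_r, !rpow_0; ring).
  rewrite !rpow_pos_eq by (try apply Rmult_lt_0_compat; lra). rewrite Rpower_mult_distr; auto. Qed.
Lemma rpow_inv x a : 0 < x -> rpow (/ x) a = / rpow x a.
Proof. intros H. rewrite !rpow_pos_eq by (try apply Rinv_0_lt_compat; lra). unfold Rpower.
  rewrite ln_Rinv by lra. rewrite <- exp_Ropp. f_equal; ring. Qed.
Lemma rpow_div x y a : 0 <= x -> 0 < y -> rpow (x / y) a = rpow x a / rpow y a.
Proof. intros Hx Hy. unfold Rdiv. rewrite rpow_mult, rpow_inv; auto. left; apply Rinv_0_lt_compat; auto. Qed.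
Lemma rpow_rpow x a b : 0 <= x -> rpow (rpow x a) b = rpow x (a * b).
Proof. intros [Hx|Hx]. rewrite (rpow_pos_eq x) by auto. rewrite rpow_pos_eq.
  rewrite Rpower_mult, rpow_pos_eq; auto. unfold Rpower; apply exp_pos.
  subst; rewrite !rpow_0; auto. Qed.
Lemma rpow_1 x : 0 <= x -> rpow x 1 = x.
Proof. intros [Hx|Hx]. rewrite rpow_pos_eq, Rpower_1; auto. subst; apply rpow_0. Qed.
Lemma rpow_eq0 x a : 0 <= x -> rpow x a = 0 -> x = 0.
Proof. intros [Hx|Hx] H; auto. pose proof (rpow_pos x a Hx). lra. Qed.

Lemma ln_le_sub1 y : 0 < y -> ln y <= y - 1.
Proof. intros Hy. destruct (Req_dec y 1). subst; rewrite ln_1; lra.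
  assert (y < exp (y - 1)) by (pose proof (exp_ineq1 (y-1)); lra).
  left. rewrite <- (ln_exp (y-1)). apply ln_increasing; auto. Qed.

Lemma exp_le_exp' x y : x <= y -> exp x <= exp y.
Proof. intros [H|H]. left; apply exp_increasing; auto. subst; lra. Qed.

Lemma wamgm t u v : 0 <= t <= 1 -> 0 < u -> 0 < v ->
  exp (t * ln u + (1 - t) * ln v) <= t * u + (1 - t) * v.
Proof. intros Ht Hu Hv. set (m := t * u + (1 - t) * v).
  assert (Hm : 0 < m). { unfold m. destruct (Req_dec t 0). subst; lra. nra. }
  rewrite <- (exp_ln m) by auto. apply exp_le_exp'.
  pose proof (ln_le_sub1 (u / m) ltac:(apply Rdiv_lt_0_compat; lra)).
  pose proof (ln_le_sub1 (v / m) ltac:(apply Rdiv_lt_0_compat; lra)).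
  rewrite ln_div in * by lra.
  assert (t * (ln u - ln m) + (1 - t) * (ln v - ln m) <= t * (u/m - 1) + (1-t) * (v/m - 1)) by nra.
  assert (t * (u/m - 1) + (1-t) * (v/m - 1) = 0) by (unfold m in *; field; lra). nra. Qed.

Lemma young a b p q : 0 <= a -> 0 <= b -> 0 < p -> 0 < q -> / p + / q = 1 ->
  a * b <= rpow a p / p + rpow b q / q.
Proof. intros Ha Hb Hp Hq Hpq.
  assert (0 <= rpow a p / p) by (apply Rdiv_le_0_compat; [apply rpow_nonneg|lra]).
  assert (0 <= rpow b q / q) by (apply Rdiv_le_0_compat; [apply rpow_nonneg|lra]).
  destruct Ha as [Ha|Ha]; [|subst; lra]. destruct Hb as [Hb|Hb]; [|subst; lra].
  rewrite !rpow_pos_eq by auto.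
  assert (0 < Rpower a p) by (unfold Rpower; apply exp_pos).
  assert (0 < Rpower b q) by (unfold Rpower; apply exp_pos).
  assert (0 <= /p <= 1) by (split; [left; apply Rinv_0_lt_compat; auto| pose proof (Rinv_0_lt_compat q Hq); lra]).
  pose proof (wamgm (/p) (Rpower a p) (Rpower b q) H3 H1 H2).
  replace (1 - / p) with (/ q) in H4 by lra.
  unfold Rpower in H4 at 1 2. rewrite !ln_exp in H4.
  replace (/ p * (p * ln a) + / q * (q * ln b)) with (ln a + ln b) in H4 by (field; lra).
  rewrite exp_plus, !exp_ln in H4 by auto. unfold Rdiv. lra. Qed.

Lemma holder n (a b : nat -> R) p q : 0 < p -> 0 < q -> / p + / q = 1 ->
  (forall i, (i < n)%nat -> 0 <= a i) -> (forall i, (i < n)%nat -> 0 <= b i) ->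
  0 < sumR n (fun i => rpow (a i) p) -> 0 < sumR n (fun i => rpow (b i) q) ->
  sumR n (fun i => a i * b i) <=
  rpow (sumR n (fun i => rpow (a i) p)) (/ p) * rpow (sumR n (fun i => rpow (b i) q)) (/ q).
Proof. intros Hp Hq Hpq Ha Hb HA HB.
  set (A := sumR n (fun i => rpow (a i) p)) in *. set (B := sumR n (fun i => rpow (b i) q)) in *.
  set (al := rpow A (/p)). set (be := rpow B (/q)).
  assert (Hal : 0 < al) by (apply rpow_pos; auto). assert (Hbe : 0 < be) by (apply rpow_pos; auto).
  assert (HalA : rpow al p = A). { unfold al. rewrite rpow_rpow by lra. replace (/ p * p) with 1 by (field; lra). apply rpow_1; lra. }
  assert (HbeB : rpow be q = B). { unfold be. rewrite rpow_rpow by lra. replace (/ q * q) with 1 by (field; lra). apply rpow_1; lra. }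
  rewrite (sumR_ext n (fun i => a i * b i) (fun i => (al * be) * ((a i / al) * (b i / be)))) by (intros; field; lra).
  rewrite sumR_scal.
  enough (sumR n (fun i => a i / al * (b i / be)) <= 1) by (pose proof (Rmult_lt_0_compat _ _ Hal Hbe); nra).
  eapply Rle_trans. apply sumR_le with (g := fun i => (/ (A * p)) * rpow (a i) p + (/ (B * q)) * rpow (b i) q).
  { intros i Hi. eapply Rle_trans. apply (young _ _ p q); auto.
    apply Rdiv_le_0_compat; [apply Ha; auto| lra].
    apply Rdiv_le_0_compat; [apply Hb; auto| lra].
    rewrite !rpow_div by (try apply Ha; try apply Hb; auto). rewrite HalA, HbeB. right; field; lra. }
  rewrite sumR_plus, !sumR_scal. fold A B. right. rewrite <- Hpq. field. lra. Qed.
Lemma jensen (f : R -> R) : concave_pos f -> forall n (u : nat -> R),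
  (forall i, (i < S n)%nat -> 0 < u i) ->
  sumR (S n) (fun i => f (u i)) <= INR (S n) * f (sumR (S n) u / INR (S n)).
Proof. intros Hc. induction n; intros u Hu.
  simpl. replace ((0 + u 0%nat) / 1) with (u 0%nat) by field. lra.
  change (sumR (S (S n)) (fun i => f (u i))) with (sumR (S n) (fun i => f (u i)) + f (u (S n))).
  change (sumR (S (S n)) u) with (sumR (S n) u + u (S n)).
  set (m := INR (S n)). assert (Hm : 0 < m) by (unfold m; apply lt_0_INR; lia).
  replace (INR (S (S n))) with (m + 1) by (unfold m; rewrite (S_INR (S n)); auto).
  pose proof (IHn u ltac:(intros; apply Hu; lia)) as IH. fold m in IH.
  set (M := sumR (S n) u / m) in *.
  assert (HM : 0 < M) by (unfold M; apply Rdiv_lt_0_compat; auto; apply sumR_pos; [lia|intros; apply Hu; lia]).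
  assert (Hun : 0 < u (S n)) by (apply Hu; lia).
  pose proof (Hc M (u (S n)) (m / (m + 1)) HM Hun ltac:(split; [apply Rdiv_le_0_compat; lra| apply Rmult_le_reg_r with (m+1); [lra|]; field_simplify; lra])) as C.
  replace (m / (m + 1) * M + (1 - m / (m + 1)) * u (S n)) with ((sumR (S n) u + u (S n)) / (m + 1)) in C
    by (unfold M; field; lra).
  apply Rmult_le_compat_l with (r := m + 1) in C; [|lra].
  replace ((m + 1) * (m / (m + 1) * f M + (1 - m / (m + 1)) * f (u (S n)))) with (m * f M + f (u (S n))) in C by (field; lra).
  lra. Qed.
Section Msg.
Variable phi : R -> R.
Hypothesis Hm : message phi.

Lemma msg_lt x y : 0 < x -> x < y -> phi x < phi y.
Proof. destruct Hm as [H _]; auto. Qed.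
Lemma msg_le x y : 0 < x -> x <= y -> phi x <= phi y.
Proof. intros Hx [H|H]. left; apply msg_lt; auto. subst; lra. Qed.
Lemma msg_inj a b : 0 < a -> 0 < b -> phi a = phi b -> a = b.
Proof. intros Ha Hb E. destruct (Rtotal_order a b) as [H|[H|H]]; auto.
  pose proof (msg_lt a b Ha H); lra. pose proof (msg_lt b a Hb H); lra. Qed.
Lemma psi_spec r : 0 < r -> psi phi (phi r) = r.
Proof. intros Hr. unfold psi.
  destruct (epsilon_spec (inhabits 0) (fun s => 0 < s /\ phi s = phi r)) as [H1 H2].
  exists r; auto. apply msg_inj; auto. Qed.
Lemma msg_exd x : 0 < x -> ex_derive phi x.
Proof. destruct Hm as [_ [H _]]; auto. Qed.
Lemma msg_cont x : 0 < x -> continuity_pt phi x.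
Proof. intros. apply derivable_continuous_pt, ex_derive_Reals_0, msg_exd; auto. Qed.
Lemma Dphi_pos x : 0 < x -> 0 < Derive phi x.
Proof. intros Hx. destruct Hm as [_ [_ [_ Hb]]]. destruct (Hb x Hx) as [c [Hc Hc']].
  specialize (Hc' x Hx (Rle_refl x)).
  destruct (Rlt_le_dec 0 (Derive phi x)) as [|Hle]; auto. exfalso.
  rewrite Rabs_left1 in Hc' by auto.
  pose proof (Derive_correct phi x (msg_exd x Hx)) as D. apply is_derive_Reals in D.
  destruct (D (- Derive phi x / 2) ltac:(lra)) as [del Hdel].
  set (h := del / 2). assert (Hh : 0 < h) by (unfold h; destruct del; simpl; lra).
  specialize (Hdel h ltac:(lra) ltac:(rewrite Rabs_right by lra; unfold h; destruct del; simpl; lra)).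
  pose proof (msg_lt x (x + h) Hx ltac:(lra)).
  assert (0 < (phi (x + h) - phi x) / h) by (apply Rdiv_lt_0_compat; lra).
  apply Rabs_def2 in Hdel. lra. Qed.

Lemma image_conv a b t : 0 < a -> 0 < b -> 0 <= t <= 1 ->
  exists r, 0 < r /\ phi r = phi a + t * (phi b - phi a).
Proof. intros Ha Hb Ht. destruct (Rtotal_order a b) as [H|[H|H]].
  - pose proof (msg_lt a b Ha H).
    destruct (f_interv_is_interv phi a b (phi a + t * (phi b - phi a)) H ltac:(split; nra)
      ltac:(intros; apply msg_cont; lra)) as [r [Hr1 Hr2]]. exists r; split; auto; lra.
  - subst. exists b; split; auto; ring.
  - pose proof (msg_lt b a Hb H).
    destruct (f_interv_is_interv phi b a (phi a + t * (phi b - phi a)) H ltac:(split; nra)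
      ltac:(intros; apply msg_cont; lra)) as [r [Hr1 Hr2]]. exists r; split; auto; lra. Qed.

Lemma psi_interv r lb ub : 0 < lb -> lb < ub -> phi lb <= r -> r <= phi ub ->
  lb <= psi phi r <= ub /\ phi (psi phi r) = r.
Proof. intros Hlb Hlu H1 H2.
  destruct (f_interv_is_interv phi lb ub r Hlu ltac:(lra) ltac:(intros; apply msg_cont; lra)) as [s [Hs1 Hs2]].
  subst r. rewrite psi_spec by lra. auto. Qed.

Lemma psi_deriv r : 0 < r -> is_derive (psi phi) (phi r) (/ Derive phi r).
Proof. intros Hr.
  assert (Hl : 0 < r / 2) by lra. assert (Hlu : r / 2 < 2 * r) by lra.
  assert (Prf : forall a, psi phi (phi (r/2)) <= a <= psi phi (phi (2*r)) -> derivable_pt phi a).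
  { intros a Ha. rewrite !psi_spec in Ha by lra. apply ex_derive_Reals_0, msg_exd; lra. }
  assert (Prg : continuity_pt (psi phi) (phi r)).
  { apply (continuity_pt_recip_interv phi (psi phi) (r/2) (2*r) Hlu).
    intros; apply msg_lt; lra.
    intros x H1 H2. unfold comp, id. apply (psi_interv x (r/2) (2*r)); auto.
    intros x H1 H2. apply (psi_interv x (r/2) (2*r)); auto.
    intros; apply msg_cont; lra.
    split; apply msg_lt; lra. }
  assert (Pi : psi phi (phi (r/2)) <= psi phi (phi r) <= psi phi (phi (2*r))).
  { rewrite !psi_spec by lra. lra. }
  assert (Hlt1 : phi (r/2) < phi (2*r)) by (apply msg_lt; lra).
  assert (Hlt2 : phi (r/2) < phi r < phi (2*r)) by (split; apply msg_lt; lra).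
  pose proof (derivable_pt_lim_recip_interv phi (psi phi) (phi (r/2)) (phi (2*r)) (phi r) Prf Prg Hlt1 Hlt2 Pi
     ltac:(intros x Hx; unfold comp, id; apply (psi_interv x (r/2) (2*r)); tauto)) as D.
  rewrite Derive_Reals in D. rewrite psi_spec in D by lra.
  apply is_derive_Reals. unfold Rdiv in D. rewrite Rmult_1_l in D. apply D.
  pose proof (Dphi_pos r Hr). lra. Qed.
End Msg.

Lemma key (lambda : R) (d : nat) (phi : R -> R) (p q : R)
  (Hlam : 0 < lambda) (Hd : (1 <= d)%nat) (Hphi : message phi)
  (Hp : 0 < p) (Hq : 0 < q) (Hpq : / p + / q = 1)
  (Hconc : concave_pos (S_phi phi p)) (R0 D : nat -> R) :
  (forall i, (i < d)%nat -> 0 < R0 i) ->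
  0 < sumR d (fun i => rpow (Rabs (D i)) q) ->
  exists xb, 0 < xb /\
  rpow (Derive phi (fd d lambda R0) * fd d lambda R0 *
        sumR d (fun i => / ((1 + R0 i) * Derive phi (R0 i)) * Rabs (D i))) q
  <= Xi_phi phi lambda q d xb * sumR d (fun i => rpow (Rabs (D i)) q).
Proof.
  intros HR HN. set (N := sumR d (fun i => rpow (Rabs (D i)) q)) in *.
  set (F := fd d lambda R0). set (a := fun i => / ((1 + R0 i) * Derive phi (R0 i))).
  assert (Ha : forall i, (i < d)%nat -> 0 < a i).
  { intros i Hi. unfold a. apply Rinv_0_lt_compat, Rmult_lt_0_compat. pose proof (HR i Hi); lra. apply Dphi_pos; auto. }
  set (A := sumR d (fun i => rpow (a i) p)).
  assert (HA : 0 < A) by (apply sumR_pos; auto; intros; apply rpow_pos; auto).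
  assert (Hq1 : 1 < q). { assert (/ q < 1) by (pose proof (Rinv_0_lt_compat p Hp); lra).
    apply Rnot_le_lt; intro. assert (1 <= / q). { rewrite <- Rinv_1. apply Rinv_le_contravar; lra. } lra. }
  assert (Hqp : / p * q = q - 1). { replace (/ p) with (1 - / q) by lra. field; lra. }
  assert (Hpq1 : p * (q - 1) = q). { rewrite <- Hqp. field; lra. }
  set (ul := fun i => ln (1 + R0 i)).
  assert (Hul : forall i, (i < d)%nat -> 0 < ul i).
  { intros i Hi. unfold ul. rewrite <- ln_1. apply ln_increasing; pose proof (HR i Hi); lra. }
  set (ub := sumR d ul / INR d).
  assert (Hd0 : 0 < INR d) by (apply lt_0_INR; lia).
  assert (Hub : 0 < ub) by (unfold ub; apply Rdiv_lt_0_compat; auto; apply sumR_pos; auto).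
  set (xb := exp ub - 1).
  assert (Hxb : 0 < xb). { unfold xb. pose proof (exp_ineq1 ub ltac:(lra)). lra. }
  exists xb. split; auto.
  assert (HF : 0 < F). { unfold F, fd. apply Rmult_lt_0_compat; auto. apply prodR_pos. intros i Hi.
    apply Rinv_0_lt_compat. pose proof (HR i Hi); lra. }
  set (K := Derive phi F * F).
  assert (HK : 0 < K) by (unfold K; apply Rmult_lt_0_compat; auto; apply Dphi_pos; auto).
  assert (H1 : sumR d (fun i => a i * Rabs (D i)) <= rpow A (/ p) * rpow N (/ q)).
  { apply holder; auto. intros; left; auto. intros; apply Rabs_pos. }
  assert (H2 : rpow (K * sumR d (fun i => a i * Rabs (D i))) q <= rpow K q * rpow A (q - 1) * N).
  { eapply Rle_trans. apply rpow_le. lra. split.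
    apply Rmult_le_pos. lra. apply sumR_nonneg; intros. apply Rmult_le_pos. left; auto. apply Rabs_pos.
    apply Rmult_le_compat_l. lra. exact H1.
    rewrite !rpow_mult by (try lra; try apply rpow_nonneg; try (apply Rmult_le_pos; apply rpow_nonneg)).
    rewrite !rpow_rpow by lra. rewrite Hqp. replace (/ q * q) with 1 by (field; lra).
    rewrite rpow_1 by (unfold N; apply sumR_nonneg; intros; apply rpow_nonneg). lra. }
  assert (HS : forall i, (i < d)%nat -> rpow (a i) p = S_phi phi p (ul i)).
  { intros i Hi. unfold S_phi, ul, a. pose proof (HR i Hi). rewrite exp_Ropp, exp_ln by lra.
    replace (1 + R0 i - 1) with (R0 i) by ring. f_equal. unfold Rdiv; rewrite Rinv_mult; reflexivity. }
  assert (HJ : A <= INR d * S_phi phi p ub).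
  { unfold A. rewrite (sumR_ext _ _ _ HS). destruct d as [|n]; [lia|]. apply jensen; auto. }
  set (c0 := / (1 + xb) / Derive phi xb).
  assert (Hc0 : 0 < c0). { unfold c0. apply Rdiv_lt_0_compat. apply Rinv_0_lt_compat; lra. apply Dphi_pos; auto. }
  assert (HSu : S_phi phi p ub = rpow c0 p).
  { unfold S_phi, c0. rewrite exp_Ropp. replace (exp ub - 1) with xb by reflexivity.
    replace (exp ub) with (1 + xb) by (unfold xb; ring). reflexivity. }
  assert (H3 : rpow A (q - 1) <= rpow (INR d) (q - 1) * rpow c0 q).
  { eapply Rle_trans. apply rpow_le. lra. split. lra. exact HJ.
    rewrite HSu, rpow_mult by (try lra; apply rpow_nonneg). rewrite rpow_rpow, Hpq1 by lra. lra. }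
  assert (HF1 : F = fd1 d lambda xb).
  { unfold F, fd, fd1. rewrite prodR_inv by (intros i Hi; pose proof (HR i Hi); lra).
    replace (1 + xb) with (exp ub) by (unfold xb; ring). rewrite exp_pow_INR.
    replace (INR d * ub) with (sumR d ul) by (unfold ub; field; lra). rewrite exp_sumR.
    unfold Rdiv. f_equal. f_equal. apply prodR_ext. intros i Hi. unfold ul. rewrite exp_ln; auto.
    pose proof (HR i Hi); lra. }
  assert (HXi : Xi_phi phi lambda q d xb = rpow (INR d) (q - 1) * (rpow K q * rpow c0 q)).
  { unfold Xi_phi. rewrite <- HF1. f_equal. rewrite <- rpow_mult by lra. f_equal. unfold K, c0, Rdiv. rewrite Rinv_mult. ring. }
  rewrite HXi. fold F. fold K.
  assert (0 <= rpow K q) by apply rpow_nonneg. assert (0 <= N) by lra.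
  assert (0 <= rpow A (q-1)) by apply rpow_nonneg.
  eapply Rle_trans. exact H2.
  replace (rpow (INR d) (q - 1) * (rpow K q * rpow c0 q) * N) with (rpow K q * (rpow (INR d) (q - 1) * rpow c0 q) * N) by ring.
  apply Rmult_le_compat_r; auto. apply Rmult_le_compat_l; auto.
Qed.

Lemma isd_val (f : R -> R) (x l l' : R) : is_derive f x l -> l = l' -> is_derive f x l'.
Proof. intros H E; subst; auto. Qed.
Lemma isd_mult (f g : R -> R) (x df dg : R) : is_derive f x df -> is_derive g x dg ->
  is_derive (fun y => f y * g y) x (df * g x + f x * dg).
Proof. intros. apply (is_derive_mult f g); auto. intros; apply Rmult_comm. Qed.
Lemma isd_comp (f g : R -> R) (x df dg : R) : is_derive f (g x) df -> is_derive g x dg ->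
  is_derive (fun y => f (g y)) x (dg * df).
Proof. intros. apply (is_derive_comp f g); auto. Qed.
Lemma isd_lin (a b x : R) : is_derive (fun s => a + s * b) x b.
Proof. auto_derive; auto; ring. Qed.
Lemma isd_inv1 (f : R -> R) (x df : R) : is_derive f x df -> 1 + f x <> 0 ->
  is_derive (fun y => / (1 + f y)) x (- df / (1 + f x) ^ 2).
Proof. intros H Hn. apply (is_derive_inv (fun y => 1 + f y)); auto.
  apply isd_val with (0 + df); [|ring].
  apply (@is_derive_plus R_AbsRing R_NormedModule (fun _ => 1) f x 0 df); auto.
  apply (@is_derive_const R_AbsRing R_NormedModule 1 x). Qed.
Lemma prod_deriv n (u : nat -> R -> R) (du : nat -> R) (t : R) :
  (forall i, (i < n)%nat -> is_derive (u i) t (du i)) -> (forall i, (i < n)%nat -> u i t <> 0) ->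
  is_derive (fun s => prodR n (fun i => u i s)) t (prodR n (fun i => u i t) * sumR n (fun i => du i / u i t)).
Proof. induction n; intros H Hn; simpl.
  apply isd_val with 0; [|ring]. apply (@is_derive_const R_AbsRing R_NormedModule 1 t).
  eapply isd_val. apply isd_mult. apply IHn; intros; [apply H|apply Hn]; lia. apply H; lia.
  assert (u n t <> 0) by (apply Hn; lia). cbv beta. field. auto. Qed.

Theorem lemma3p2 (lambda : R) (d : nat) (phi : R -> R) (p q : R)
  (Hlam : 0 < lambda) (Hd : (1 <= d)%nat) (Hphi : message phi)
  (Hp : 0 < p) (Hq : 0 < q) (Hpq : / p + / q = 1)
  (Hconc : concave_pos (S_phi phi p))
  (xv yv : nat -> R)
  (Hx : forall i, (i < d)%nat -> exists r, 0 < r /\ xv i = phi r)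
  (Hy : forall i, (i < d)%nat -> exists r, 0 < r /\ yv i = phi r) :
  Rbar_le (Finite (rpow (Rabs (fphi d lambda phi xv - fphi d lambda phi yv)) q))
          (Rbar_mult (xi_phi phi lambda q d) (Finite (qnorm_pow d q xv yv))).
Proof.
  assert (HN0 : 0 <= qnorm_pow d q xv yv) by (apply sumR_nonneg; intros; apply rpow_nonneg).
  destruct HN0 as [HN|HN].
  2: { assert (Heq : forall i, (i < d)%nat -> xv i = yv i).
       { intros i Hi. unfold qnorm_pow in HN.
         pose proof (sumR_zero d _ (fun i _ => rpow_nonneg _ _) (eq_sym HN) i Hi) as H0.
         apply rpow_eq0 in H0; [|apply Rabs_pos].
         destruct (Req_dec (xv i - yv i) 0) as [Hz|Hz]; [lra|]. apply Rabs_no_R0 in Hz. contradiction. }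
       assert (E : fphi d lambda phi xv = fphi d lambda phi yv).
       { unfold fphi, fd. f_equal. f_equal. apply prodR_ext. intros i Hi. rewrite Heq; auto. }
       rewrite E, Rminus_diag, Rabs_R0, rpow_0, <- HN, Rbar_mult_0_r. simpl. lra. }
  set (z := fun i t => xv i + t * (yv i - xv i)).
  set (Rt := fun i t => psi phi (z i t)).
  assert (HRt : forall i t, (i < d)%nat -> 0 <= t <= 1 -> 0 < Rt i t /\ phi (Rt i t) = z i t).
  { intros i t Hi Ht. destruct (Hx i Hi) as [a [Ha Ea]]. destruct (Hy i Hi) as [b [Hb Eb]].
    destruct (image_conv phi Hphi a b t Ha Hb Ht) as [r [Hr Er]].
    unfold Rt, z. rewrite Ea, Eb, <- Er, psi_spec; auto. }
  set (u := fun i t => / (1 + Rt i t)).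
  set (du := fun i t => - ((yv i - xv i) * / Derive phi (Rt i t)) / (1 + Rt i t) ^ 2).
  set (F := fun t => fd d lambda (fun i => Rt i t)).
  set (gd := fun t => (lambda * (prodR d (fun i => u i t) * sumR d (fun i => du i t / u i t))) * Derive phi (F t)).
  assert (HF : forall t, 0 <= t <= 1 -> 0 < F t).
  { intros t Ht. unfold F, fd. apply Rmult_lt_0_compat; auto. apply prodR_pos. intros i Hi.
    apply Rinv_0_lt_compat. pose proof (HRt i t Hi Ht); lra. }
  assert (Hder : forall t, 0 <= t <= 1 -> is_derive (fun s => phi (F s)) t (gd t)).
  { intros t Ht. unfold gd. apply isd_comp.
    - apply Derive_correct, msg_exd; auto.
    - unfold F, fd. apply is_derive_scal. apply prod_deriv.
      + intros i Hi. unfold u, du. apply isd_inv1.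
        * unfold Rt. apply isd_comp. destruct (HRt i t Hi Ht) as [H1 H2].
          pose proof (psi_deriv phi Hphi (Rt i t) H1) as P. unfold Rt in P, H2. rewrite H2 in P. exact P. apply isd_lin.
        * pose proof (HRt i t Hi Ht); lra.
      + intros i Hi. unfold u. apply Rinv_neq_0_compat. pose proof (HRt i t Hi Ht); lra. }
  destruct (MVT_cor3 (fun s => phi (F s)) gd 0 1 Rlt_0_1
     (fun x H1 H2 => proj1 (is_derive_Reals _ _ _) (Hder x (conj H1 H2)))) as [c [Hc1 [Hc2 Hmvt]]].
  assert (E0 : fphi d lambda phi xv = phi (F 0)).
  { unfold fphi, F, Rt, z, fd. f_equal. f_equal. apply prodR_ext. intros i Hi.
    rewrite Rmult_0_l, Rplus_0_r. reflexivity. }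
  assert (E1 : fphi d lambda phi yv = phi (F 1)).
  { unfold fphi, F, Rt, z, fd. f_equal. f_equal. apply prodR_ext. intros i Hi.
    replace (xv i + 1 * (yv i - xv i)) with (yv i) by ring. reflexivity. }
  assert (Hc : 0 <= c <= 1) by lra.
  set (D := fun i => yv i - xv i).
  assert (HND : sumR d (fun i => rpow (Rabs (D i)) q) = qnorm_pow d q xv yv).
  { apply sumR_ext. intros i Hi. unfold D. rewrite Rabs_minus_sym. reflexivity. }
  destruct (key lambda d phi p q Hlam Hd Hphi Hp Hq Hpq Hconc (fun i => Rt i c) D
     ltac:(intros i Hi; apply (HRt i c Hi Hc)) ltac:(rewrite HND; auto)) as [xb [Hxb Hkey]].
  rewrite HND in Hkey.
  assert (Hbound : Rabs (fphi d lambda phi xv - fphi d lambda phi yv) <=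
     Derive phi (fd d lambda (fun i => Rt i c)) * fd d lambda (fun i => Rt i c) *
     sumR d (fun i => / ((1 + Rt i c) * Derive phi (Rt i c)) * Rabs (D i))).
  { change (fd d lambda (fun i => Rt i c)) with (F c). rewrite E0, E1, Rabs_minus_sym, Hmvt. replace (phi (F 0) + gd c * (1 - 0) - phi (F 0)) with (gd c) by ring.
    pose proof (HF c Hc) as HFc.
    assert (HPc : 0 < Derive phi (F c)) by (apply Dphi_pos; auto).
    replace (gd c) with (Derive phi (F c) * F c * sumR d (fun i => du i c / u i c)) by (unfold gd, F, fd, u; ring).
    rewrite Rabs_mult, Rabs_right by (apply Rle_ge, Rmult_le_pos; lra).
    apply Rmult_le_compat_l. apply Rmult_le_pos; lra.
    eapply Rle_trans. apply sumR_abs. right. apply sumR_ext. intros i Hi.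
    destruct (HRt i c Hi Hc) as [H1 _]. pose proof (Dphi_pos phi Hphi _ H1).
    replace (du i c / u i c) with (- (/ ((1 + Rt i c) * Derive phi (Rt i c)) * D i)).
    rewrite Rabs_Ropp, Rabs_mult, (Rabs_right (/ _)). reflexivity.
    apply Rle_ge; left; apply Rinv_0_lt_compat, Rmult_lt_0_compat; lra.
    unfold du, u, D. field. lra. }
  assert (Hfin : rpow (Rabs (fphi d lambda phi xv - fphi d lambda phi yv)) q <=
                 Xi_phi phi lambda q d xb * qnorm_pow d q xv yv).
  { eapply Rle_trans; [|exact Hkey]. apply rpow_le. lra. split. apply Rabs_pos. exact Hbound. }
  assert (Hsup : Rbar_le (Finite (Xi_phi phi lambda q d xb)) (xi_phi phi lambda q d)).
  { unfold xi_phi. destruct (Lub_Rbar_correct (fun r => exists x, 0 < x /\ r = Xi_phi phi lambda q d x)) as [Hub _].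
    apply Hub. exists xb; auto. }
  destruct (xi_phi phi lambda q d) as [r| |]; simpl in Hsup |- *.
  - eapply Rle_trans. exact Hfin. apply Rmult_le_compat_r; lra.
  - destruct (Rle_dec 0 (qnorm_pow d q xv yv)); [|lra].
    destruct (Rle_lt_or_eq_dec 0 _ r); simpl; auto. lra.
  - contradiction.
Qed.
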